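(* Let $b>3$ be a strongly symmetric base. Then $b+1$ is prime.
   Context: Let $b>2$ be an integer base and write $(d_k,d_{k-1},\ldots,d_0)_b=\sum_{j=0}^k d_j b^j$ with $0\le d_j<b$. A natural number $p=(d_k,\ldots,d_0)_b$ with $d_k\neq 0$ and $d_0\neq 0$ that is not a base-$b$ palindrome is an $(n,b)$-palintiple if $(d_k,\ldots,d_0)_b=n\,(d_0,d_1,\ldots,d_k)_b$ for an integer $n$ with $1<n<b$; a base-$b$ palintiple is an $(n,b)$-palintiple for some such $n$. Its carries $c_0,\ldots,c_{k+1}$ are the carries arising in the base-$b$ multiplication of $(d_0,\ldots,d_k)_b$ by $n$: $c_0=0$ and $n d_{k-j}+c_j=d_j+b\,c_{j+1}$ for $0\le j\le k$ (so $c_{k+1}=0$). The palintiple is symmetric if $c_j=c_{k-j}$ for all $0\le j\le k$. A base $b$ is strongly symmetric if every base-$b$ palintiple (for every $n$ with $1<n<b$) is symmetric. *)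

(* Defs.v *)
From mathcomp Require Import all_boot.
Set Implicit Arguments. Unset Strict Implicit. Unset Printing Implicit Defensive.

(* Digits are given by a function d : nat -> nat, with d j the j-th base-b
   digit (d 0 least significant) of a (k+1)-digit number; only d 0..d k matter. *)

Definition digval (b k : nat) (d : nat -> nat) : nat :=
  \sum_(j < k.+1) d j * b ^ j.

Definition revdigval (b k : nat) (d : nat -> nat) : nat :=
  \sum_(j < k.+1) d (k - j) * b ^ j.

Definition valid_digits (b k : nat) (d : nat -> nat) : Prop :=
  forall j, j <= k -> d j < b.

Definition is_palindrome (k : nat) (d : nat -> nat) : Prop :=
  forall j, j <= k -> d j = d (k - j).

Definition palintiple (n b k : nat) (d : nat -> nat) : Prop :=
  (1 < n < b) /\ valid_digits b k d /\ d k <> 0 /\ d 0 <> 0 /\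
  ~ is_palindrome k d /\ digval b k d = n * revdigval b k d.

(* carries of the multiplication of (d_0,...,d_k)_b by n:
   c_0 = 0 and n d_{k-j} + c_j = d_j + b c_{j+1}, i.e.
   c_{j+1} = (n d_{k-j} + c_j) div b. *)
Fixpoint carry (n b k : nat) (d : nat -> nat) (j : nat) : nat :=
  match j with
  | 0 => 0
  | j'.+1 => (n * d (k - j') + carry n b k d j') %/ b
  end.

Definition symmetric_palintiple (n b k : nat) (d : nat -> nat) : Prop :=
  forall j, j <= k -> carry n b k d j = carry n b k d (k - j).

Definition strongly_symmetric (b : nat) : Prop :=
  forall n k (d : nat -> nat), palintiple n b k d -> symmetric_palintiple n b k d.

(* Main.v *)
Require Import Defs.
From mathcomp Require Import all_boot.
From mathcomp Require Import zify.

Lemma two_digit (b n m : nat) : 1 < n -> 1 < m -> b.+1 = n.+1 * m ->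
  ~ strongly_symmetric b.
Proof.
move=> hn hm hb hs.
pose d := fun j : nat => if j == 0 then m - 1 else n * m - 1.
have hbn : n < b by nia.
have H : palintiple n b 1 d.
  split; first by apply/andP; split.
  split.
    move=> j hj; rewrite /d; case: (j == 0); nia.
  split; first by rewrite /d /=; nia.
  split; first by rewrite /d /=; nia.
  split.
    move=> hp; have := hp 0 isT; rewrite /d /=; nia.
  rewrite /digval /revdigval !big_ord_recr /= !big_ord0 /d /=.
  nia.
have := hs _ _ _ H 0 isT.
rewrite /= /d /=.
have hge : b <= n * (n * m - 1) by nia.
have : 0 < (n * (n * m - 1) + 0) %/ b by rewrite divn_gt0; [rewrite addn0|lia].
lia.
Qed.

Theorem theorem2 (b : nat) : 3 < b -> strongly_symmetric b -> prime b.+1.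
Proof.
move=> hb hs; apply/negPn/negP => /primePn [|[d hd1 hdv]]; first lia.
move: hd1 => /andP [hd1 hd].
move/dvdnP: hdv => [e he].
have he1 : 1 < e by nia.
case: (leqP 3 d) => h3.
  apply: (@two_digit b d.-1 e _ he1 _ hs); first lia.
  rewrite he; have -> : (d.-1).+1 = d by lia. by rewrite mulnC.
apply: (@two_digit b e.-1 d _ hd1 _ hs); first nia.
have -> : (e.-1).+1 = e by lia. by [].
Qed.
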